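(* Let $\gamma,\sigma:[a,b]\to V$ be continuous paths of bounded variation. Let $\phi:\mathbb{N}\cup\{0\}\to\mathbb{R}$ be such that both $|\phi|$ and $|\phi_{+1}|$ satisfy: $\sum_kC^k|\cdot|(k)(k!)^{-2}<\infty$ for every $C>0$, where $\phi_{+1}(k)=\phi(k+1)$. Then the $\phi$- and $\phi_{+1}$-signature kernels of $\gamma$ and $\sigma$ are well defined and, for all $(s,t)\in[a,b]^2$, \[ K_\phi^{\gamma,\sigma}(s,t)=\phi(0)+\int_a^s\int_a^tK_{\phi_{+1}}^{\gamma,\sigma}(u,v)\,\langle d\gamma_u,d\sigma_v\rangle. \]
   Context: $V$ is a finite-dimensional real inner product space, $\langle\cdot,\cdot\rangle_k$ the induced Hilbert–Schmidt inner product on $V^{\otimes k}$. Signature: $S(\gamma)^0=1$, $S(\gamma)^k_{s,t}=\int_{s<u_1<\dots<u_k<t}d\gamma_{u_1}\otimes\cdots\otimes d\gamma_{u_k}$. For $\phi$ real-valued, $K_\phi^{\gamma,\sigma}(s,t)=\sum_{k\ge0}\phi(k)\langle S(\gamma)^k_{a,s},S(\sigma)^k_{a,t}\rangle_k$. *)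

(* Defs.v *)
From HB Require Import structures.
From mathcomp Require Import all_boot all_order all_algebra.
From mathcomp Require Import all_classical all_reals all_analysis.
Set Implicit Arguments. Unset Strict Implicit. Unset Printing Implicit Defensive.
Import Order.TTheory GRing.Theory Num.Theory.
Import numFieldNormedType.Exports.
Local Open Scope classical_set_scope.
Local Open Scope ring_scope.

Section Defs.
Variables (R : realType) (d : nat).

(* V = R^d (row vectors) with the standard Euclidean inner product. *)
Definition dotV (u v : 'rV[R]_d) : R := \sum_(c < d) u 0 c * v 0 c.

Definition coordp (g : R -> 'rV[R]_d) (c : 'I_d) : R -> R := fun t => g t 0 c.

Definition tagged_partition (a b delta : R) (n : nat) (x xi : nat -> R) : Prop :=
  x 0%N = a /\ x n = b /\
  (forall i, (i < n)%N ->
     x i <= x i.+1 /\ x i <= xi i /\ xi i <= x i.+1 /\ x i.+1 - x i < delta).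

Definition RS_sum (f g : R -> R) (n : nat) (x xi : nat -> R) : R :=
  \sum_(i < n) f (xi i) * (g (x i.+1) - g (x i)).

Definition is_RS (f g : R -> R) (a b I : R) : Prop :=
  forall e : R, 0 < e -> exists2 delta : R, 0 < delta &
    forall n x xi, tagged_partition a b delta n x xi ->
      `|RS_sum f g n x xi - I| < e.

(* total version: the integral if it exists, 0 otherwise *)
Definition RSint (f g : R -> R) (a b : R) : R := xget 0 [set I | is_RS f g a b I].

(* For a word w = [:: i_1; ...; i_k],
   sig g s t w = \int_{s<u_1<...<u_k<t} dg^{i_1}_{u_1} ... dg^{i_k}_{u_k},
   i.e. the (i_1,...,i_k) coordinate of S(g)^k_{s,t}.
   sigrev works on the reversed word (outermost integral first). *)
Fixpoint sigrev (g : R -> 'rV[R]_d) (s : R) (w : seq 'I_d) (t : R) : R :=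
  match w with
  | [::] => 1
  | i :: w' => RSint (sigrev g s w') (coordp g i) s t
  end.

Definition sig (g : R -> 'rV[R]_d) (s t : R) (w : seq 'I_d) : R :=
  sigrev g s (rev w) t.

Definition sig_inner (g h : R -> 'rV[R]_d) (a s t : R) (k : nat) : R :=
  \sum_(w : k.-tuple 'I_d) sig g a s w * sig h a t w.

Definition sig_kernel_terms (phi : nat -> R) (g h : R -> 'rV[R]_d) (a s t : R)
  : nat -> R := fun k => phi k * sig_inner g h a s t k.

Definition sig_kernel (phi : nat -> R) (g h : R -> 'rV[R]_d) (a s t : R) : R :=
  limn (series (sig_kernel_terms phi g h a s t)).

Definition phi_shift (phi : nat -> R) : nat -> R := fun k => phi k.+1.

Definition growth_cond (psi : nat -> R) : Prop :=
  forall C : R, 0 < C ->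
    cvgn (series (fun k => C ^+ k * `|psi k| / ((k`!)%:R ^+ 2))).

Definition is_RS2 (F : R -> R -> R) (g h : R -> 'rV[R]_d) (a s c t I : R) : Prop :=
  forall e : R, 0 < e -> exists2 delta : R, 0 < delta &
    forall n x xi m y eta,
      tagged_partition a s delta n x xi ->
      tagged_partition c t delta m y eta ->
      `|\sum_(i < n) \sum_(j < m)
          F (xi i) (eta j) * dotV (g (x i.+1) - g (x i)) (h (y j.+1) - h (y j))
        - I| < e.

End Defs.

(* Main.v *)
Require Import Defs.
From HB Require Import structures.
From mathcomp Require Import all_boot all_order all_algebra.
From mathcomp Require Import all_classical all_reals all_analysis.
From mathcomp Require Import ring lra.
Set Implicit Arguments. Unset Strict Implicit. Unset Printing Implicit Defensive.
Import Order.TTheory GRing.Theory Num.Theory.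
Import numFieldNormedType.Exports.
Local Open Scope classical_set_scope.
Local Open Scope ring_scope.

Section RS.
Variable R : realType.
Implicit Types (p q r u v z lo hi : R).

Definition clamp lo hi z : R := if z <= lo then lo else if hi <= z then hi else z.

Ltac clean := repeat match goal with
  | H : (?x <= ?y) = false |- _ => move/negbT: H; rewrite -ltNge => H
  | H : (?x <= ?y) = true |- _ => change (is_true (x <= y)) in H
  end.

Lemma clamp_lo lo hi z : lo <= hi -> z <= lo -> clamp lo hi z = lo.
Proof. by rewrite /clamp => _ ->. Qed.

Lemma clamp_hi lo hi z : lo <= hi -> hi <= z -> clamp lo hi z = hi.
Proof.
rewrite /clamp => h1 h2; case: ifP => h3 //; clean; [lra|by rewrite h2].
Qed.

Lemma clamp_in lo hi z : lo <= hi -> lo <= clamp lo hi z <= hi.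
Proof. rewrite /clamp => h; repeat case: ifP => ?; clean; apply/andP; split; lra. Qed.

Lemma clamp_mono lo hi z z' : lo <= hi -> z <= z' -> clamp lo hi z <= clamp lo hi z'.
Proof. rewrite /clamp => h1 h2; repeat case: ifP => ?; clean; lra. Qed.

Lemma clamp_sym (g : R -> R) x0 x1 y0 y1 : x0 <= x1 -> y0 <= y1 ->
  g (clamp x0 x1 y1) - g (clamp x0 x1 y0) = g (clamp y0 y1 x1) - g (clamp y0 y1 x0).
Proof.
rewrite /clamp => h1 h2; repeat case: ifP => ?; clean;
 match goal with |- g ?A - g ?B = g ?C - g ?D =>
  first [ by lra
        | by congr (g _ - g _); lra
        | by rewrite (_ : A = B); [rewrite (_ : C = D); [rewrite !subrr | lra] | lra] ] end.
Qed.

Lemma clamp_neq lo hi y0 y1 : lo <= hi -> y0 <= y1 ->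
  clamp lo hi y0 != clamp lo hi y1 -> y0 < hi /\ lo < y1.
Proof.
move=> h1 h2 hn; split; rewrite ltNge; apply/negP => h.
  by rewrite !clamp_hi ?eqxx // in hn; lra.
by rewrite !clamp_lo ?eqxx // in hn; lra.
Qed.


Lemma tp_mono p q d n x xi : tagged_partition p q d n x xi ->
  forall i j, (i <= j)%N -> (j <= n)%N -> x i <= x j.
Proof.
move=> [x0 [xn H]] i j; elim: j => [|j IH] ij jn.
  by move: ij; rewrite leqn0 => /eqP ->.
move: ij; rewrite leq_eqVlt => /orP[/eqP -> //|ij].
have [h _] := H j jn.
exact: le_trans (IH ij (ltnW jn)) h.
Qed.

Lemma tp_bnd p q d n x xi : tagged_partition p q d n x xi ->
  forall i, (i <= n)%N -> p <= x i /\ x i <= q.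
Proof.
move=> P i iN; have [x0 [xn _]] := P; split.
  by rewrite -x0; apply: (tp_mono P).
by rewrite -xn; apply: (tp_mono P).
Qed.

Lemma tp_tag p q d n x xi : tagged_partition p q d n x xi ->
  forall i, (i < n)%N -> p <= xi i /\ xi i <= q.
Proof.
move=> P i iN; have [x0 [xn H]] := P; have [_ [h1 [h2 _]]] := H i iN.
have [b1 _] := tp_bnd P (ltnW iN); have [_ b2] := tp_bnd P iN.
split; lra.
Qed.

Lemma sum_tele (u : nat -> R) n : \sum_(i < n) (u i.+1 - u i) = u n - u 0%N.
Proof. by rewrite -(big_mkord xpredT (fun i => u i.+1 - u i)) telescope_sumr. Qed.

Lemma RS_cauchy p q d e (f g W : R -> R) n x xi m y eta :
  (forall u v, p <= u -> u <= v -> v <= q -> `|g v - g u| <= W v - W u) ->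
  (forall u v, p <= u -> u <= q -> p <= v -> v <= q -> `|u - v| < d + d ->
     `|f u - f v| <= e) ->
  tagged_partition p q d n x xi -> tagged_partition p q d m y eta ->
  `|RS_sum f g n x xi - RS_sum f g m y eta| <= e * (W q - W p).
Proof.
move=> gW fe Px Py.
have [x0 [xn Hx]] := Px; have [y0 [ym Hy]] := Py.
pose cl (i : nat) z := clamp (x i) (x i.+1) z.
pose mu (i j : nat) := g (cl i (y j.+1)) - g (cl i (y j)).
pose nu (i j : nat) := W (cl i (y j.+1)) - W (cl i (y j)).
have xle i : (i < n)%N -> x i <= x i.+1 by move=> /Hx [].
have yle j : (j < m)%N -> y j <= y j.+1 by move=> /Hy [].
have tele (h : R -> R) (i : 'I_n) :
    \sum_(j < m) (h (cl i (y j.+1)) - h (cl i (y j))) = h (x i.+1) - h (x i).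
  rewrite (sum_tele (fun j => h (cl i (y j)))) /cl ym y0.
  have [b1 _] := tp_bnd Px (ltnW (ltn_ord i)).
  have [_ b2] := tp_bnd Px (ltn_ord i).
  by rewrite clamp_hi ?clamp_lo //; apply: xle.
have E1 : RS_sum f g n x xi = \sum_(i < n) \sum_(j < m) f (xi i) * mu i j.
  by rewrite /RS_sum; apply: eq_bigr => i _; rewrite -mulr_sumr /mu tele.
have E2 : RS_sum f g m y eta = \sum_(i < n) \sum_(j < m) f (eta j) * mu i j.
  rewrite exchange_big /RS_sum; apply: eq_bigr => j _; rewrite -mulr_sumr.
  congr (_ * _); rewrite /mu /cl.
  under eq_bigr => i _ do rewrite clamp_sym ?xle ?yle //.
  rewrite (sum_tele (fun i => g (clamp (y j) (y j.+1) (x i)))) xn x0.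
  have [b1 _] := tp_bnd Py (ltnW (ltn_ord j)).
  have [_ b2] := tp_bnd Py (ltn_ord j).
  by rewrite clamp_hi ?clamp_lo //; apply: yle.
have EW : \sum_(i < n) \sum_(j < m) nu i j = W q - W p.
  under eq_bigr => i _ do rewrite /nu tele.
  by rewrite (sum_tele (fun i => W (x i))) xn x0.
rewrite E1 E2 -sumrB -EW mulr_sumr.
apply: le_trans (ler_norm_sum _ _ _) _; apply: ler_sum => i _.
rewrite -sumrB mulr_sumr.
apply: le_trans (ler_norm_sum _ _ _) _; apply: ler_sum => j _.
rewrite -mulrBl normrM.
have xi1 := xle i (ltn_ord i); have yj1 := yle j (ltn_ord j).
have [bx1 _] := tp_bnd Px (ltnW (ltn_ord i)); have [_ bx2] := tp_bnd Px (ltn_ord i).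
have [yb1 _] := tp_bnd Py (ltnW (ltn_ord j)); have [_ yb2] := tp_bnd Py (ltn_ord j).
have [c1 c2] := andP (clamp_in (y j) xi1).
have [c3 c4] := andP (clamp_in (y j.+1) xi1).
have cm := clamp_mono xi1 yj1.
have mnu : `|mu i j| <= nu i j by apply: gW; rewrite /cl; lra.
have [heq|hne] := eqVneq (cl i (y j)) (cl i (y j.+1)).
  rewrite /mu heq subrr normr0 mulr0.
  by rewrite /nu heq subrr mulr0.
have [ho1 ho2] := clamp_neq xi1 yj1 hne.
have [_ [t1 [t2 t3]]] := Hx i (ltn_ord i).
have [_ [t4 [t5 t6]]] := Hy j (ltn_ord j).
have fb : `|f (xi i) - f (eta j)| <= e.
  apply: fe; try lra.
  rewrite ltr_norml; apply/andP; split; lra.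
have e0 : 0 <= e by apply: le_trans fb.
exact: ler_pM.
Qed.

Definition ux p q (k : nat) (i : nat) : R := p + i%:R * ((q - p) / k.+1%:R).

Lemma upart_tp p q d k : p <= q -> (q - p) / k.+1%:R < d ->
  tagged_partition p q d k.+1 (ux p q k) (ux p q k).
Proof.
move=> pq hd; have h0 : 0 <= (q - p) / k.+1%:R by rewrite divr_ge0 // subr_ge0.
split; first by rewrite /ux mul0r addr0.
split; first by rewrite /ux mulrCA divff ?mulr1 ?subrKC // pnatr_eq0.
move=> i _; have dx : ux p q k i.+1 = ux p q k i + (q - p) / k.+1%:R.
  by rewrite /ux -natr1 mulrDl mul1r addrA.
set c := (q - p) / k.+1%:R in h0 hd dx *; rewrite dx; split; [lra|split; [lra|split; lra]].
Qed.

Lemma upart_small p q d : 0 < d -> exists K, forall k, (K <= k)%N -> (q - p) / k.+1%:R < d.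
Proof.
move=> d0; exists (Num.truncn ((q - p) / d)) => k Kk.
have h := Num.Theory.truncnS_gt ((q - p) / d).
have h2 : (Num.truncn ((q - p) / d)).+1%:R <= k.+1%:R :> R by rewrite ler_nat ltnS.
rewrite ltr_pdivrMr ?ltr0n // mulrC -ltr_pdivrMr //; lra.
Qed.

Definition ucont p q (f : R -> R) := forall e, 0 < e -> exists2 d, 0 < d &
  forall u v, p <= u -> u <= q -> p <= v -> v <= q -> `|u - v| < d -> `|f u - f v| <= e.

Definition Wctrl p q (g W : R -> R) :=
  forall u v, p <= u -> u <= v -> v <= q -> `|g v - g u| <= W v - W u.

Lemma RS_key p q f g W : p <= q -> Wctrl p q g W -> ucont p q f ->
  forall e, 0 < e -> exists2 d, 0 < d & forall n x xi m y eta,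
    tagged_partition p q d n x xi -> tagged_partition p q d m y eta ->
    `|RS_sum f g n x xi - RS_sum f g m y eta| < e.
Proof.
move=> pq gW fc e e0.
have Wpq : 0 <= W q - W p by apply: le_trans (gW _ _ _ _ _); rewrite ?lexx.
have X0 : 0 < W q - W p + 1 by lra.
have e'0 : 0 < e / (W q - W p + 1) by rewrite divr_gt0.
have [d0 d00 Hd] := fc _ e'0.
exists (d0 / 2); first by rewrite divr_gt0.
move=> n x xi m y eta P Q.
apply: le_lt_trans (RS_cauchy (e := e / (W q - W p + 1)) gW _ P Q) _.
  by move=> u v h1 h2 h3 h4 h5; apply: Hd => //; move: h5; rewrite -splitr.
have : e / (W q - W p + 1) * (W q - W p) < e / (W q - W p + 1) * (W q - W p + 1).
  by rewrite ltr_pM2l //; lra.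
by rewrite divfK ?lt0r_neq0.
Qed.

Lemma RS_exists p q f g W : p <= q -> Wctrl p q g W -> ucont p q f ->
  exists I, is_RS f g p q I.
Proof.
move=> pq gW fc.
pose s k := RS_sum f g k.+1 (ux p q k) (ux p q k).
have key := RS_key pq gW fc.
have cs : cvgn s.
  apply/cauchy_cvgP; apply: cauchy_exP => e e0.
  have [d d0 Hd] := key e e0; have [K HK] := upart_small p q d0.
  exists (s K); exists K => // k /= Kk.
  rewrite /ball /=; apply: Hd; apply: upart_tp => //; apply: HK => //.
exists (limn s) => e e0.
have e20 : 0 < e / 2 by rewrite divr_gt0.
have [d d0 Hd] := key _ e20; have [K1 HK1] := upart_small p q d0.
have cl : s @ \oo --> limn s by apply: cs.
move/cvgrPdist_lt: cl => /(_ _ e20) [K2 _ HK2].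
exists d => // n x xi P.
have HP := Hd _ _ _ _ _ _ P (upart_tp pq (HK1 (maxn K1 K2) (leq_maxl _ _))).
have HQ : `|limn s - s (maxn K1 K2)| < e / 2 by apply: HK2; rewrite /= leq_maxr.
rewrite (splitr e); apply: le_lt_trans (ler_distD (s (maxn K1 K2)) _ _) _.
by rewrite distrC in HQ; apply: ltrD.
Qed.

Lemma RS_sum_bound p q d n x xi (f g W : R -> R) M :
  Wctrl p q g W -> (forall u, p <= u -> u <= q -> `|f u| <= M) ->
  tagged_partition p q d n x xi -> `|RS_sum f g n x xi| <= M * (W q - W p).
Proof.
move=> gW fM P; have [x0 [xn H]] := P.
rewrite -xn -x0 -(sum_tele (fun i => W (x i))) mulr_sumr.
apply: le_trans (ler_norm_sum _ _ _) _; apply: ler_sum => i _.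
have [b1 _] := tp_bnd P (ltnW (ltn_ord i)); have [_ b2] := tp_bnd P (ltn_ord i).
have [t1 t2] := tp_tag P (ltn_ord i); have [h1 _] := H i (ltn_ord i).
by rewrite normrM; apply: ler_pM => //; [apply: fM | apply: gW].
Qed.

Definition catx n1 (x1 x2 : nat -> R) (i : nat) := if (i <= n1)%N then x1 i else x2 (i - n1)%N.
Definition catxi n1 (xi1 xi2 : nat -> R) (i : nat) := if (i < n1)%N then xi1 i else xi2 (i - n1)%N.

Lemma tp_cat p r q d n1 x1 xi1 n2 x2 xi2 :
  tagged_partition p r d n1 x1 xi1 -> tagged_partition r q d n2 x2 xi2 ->
  tagged_partition p q d (n1 + n2) (catx n1 x1 x2) (catxi n1 xi1 xi2) /\
  forall f g, RS_sum f g (n1 + n2) (catx n1 x1 x2) (catxi n1 xi1 xi2) =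
     RS_sum f g n1 x1 xi1 + RS_sum f g n2 x2 xi2.
Proof.
move=> [a0 [an H1]] [b0 [bn H2]].
have cR j : catx n1 x1 x2 (n1 + j) = x2 j.
  rewrite /catx; case: ifP => h; last by rewrite addKn.
  have -> : j = 0%N by move: h; rewrite -{2}(addn0 n1) leq_add2l leqn0 => /eqP.
  by rewrite addn0 an b0.
have cL i : (i <= n1)%N -> catx n1 x1 x2 i = x1 i by rewrite /catx => ->.
have xR j : catxi n1 xi1 xi2 (n1 + j) = xi2 j.
  by rewrite /catxi ltnNge leq_addr /= addKn.
have xL i : (i < n1)%N -> catxi n1 xi1 xi2 i = xi1 i by rewrite /catxi => ->.
split.
  split; first by rewrite cL.
  split; first by rewrite cR.
  move=> i hi; case: (ltnP i n1) => h.
    rewrite (cL i) ?(ltnW h) // (cL i.+1) // xL //; exact: H1 i h.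
  rewrite -(subnKC h) -addnS !cR xR; apply: H2.
  by rewrite -(ltn_add2l n1) (subnKC h).
move=> f g; rewrite /RS_sum big_split_ord /=; congr (_ + _).
  by apply: eq_bigr => i _; rewrite (cL i) ?(ltnW (ltn_ord i)) // (cL i.+1) // xL.
by apply: eq_bigr => i _; rewrite -addnS !cR xR.
Qed.

Lemma part_ex p q d : p <= q -> 0 < d -> exists n x, tagged_partition p q d n x x.
Proof.
move=> pq d0; have [K HK] := upart_small p q d0.
by exists K.+1, (ux p q K); apply: upart_tp => //; apply: HK.
Qed.

Lemma tp_le p q d d' n x xi : d <= d' -> tagged_partition p q d n x xi ->
  tagged_partition p q d' n x xi.
Proof.
move=> dd [h1 [h2 H]]; split => //; split => // i /H [t1 [t2 [t3 t4]]].
split => //; split => //; split => //; lra.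
Qed.

Definition Reg p q (W f : R -> R) M := (forall u, p <= u -> u <= q -> `|f u| <= M) /\
  (forall u v, p <= u -> u <= v -> v <= q -> `|f v - f u| <= M * (W v - W u)).

Lemma Wctrl_sub p q p' q' g W : p <= p' -> q' <= q -> Wctrl p q g W -> Wctrl p' q' g W.
Proof. by move=> h1 h2 H u v h3 h4 h5; apply: H => //; lra. Qed.

Lemma ucont_sub p q p' q' f : p <= p' -> q' <= q -> ucont p q f -> ucont p' q' f.
Proof.
move=> h1 h2 H e e0; have [d d0 Hd] := H e e0; exists d => // u v *.
apply: Hd => //; lra.
Qed.

Lemma Reg_M0 p q W f M : p <= q -> Reg p q W f M -> 0 <= M.
Proof. by move=> pq [H _]; apply: le_trans (H p _ _); rewrite ?lexx. Qed.

Lemma Reg_ucont p q W f M : p <= q -> Reg p q W f M -> ucont p q W -> ucont p q f.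
Proof.
move=> pq hR Wc e e0; have M0 := Reg_M0 pq hR; have [_ HL] := hR.
have X0 : 0 < M + 1 by lra.
have [d d0 Hd] := Wc (e / (M + 1)) (divr_gt0 e0 X0).
exists d => // u v h1 h2 h3 h4 h5.
have HW := Hd u v h1 h2 h3 h4 h5.
have key : `|f u - f v| <= M * `|W u - W v|.
  case: (leP u v) => uv.
    rewrite distrC; apply: le_trans (HL u v h1 uv h4) _.
    by apply: ler_wpM2l => //; rewrite distrC ler_norm.
  apply: le_trans (HL v u h3 (ltW uv) h2) _.
  by apply: ler_wpM2l => //; rewrite ler_norm.
apply: le_trans key _; apply: le_trans (ler_wpM2l M0 HW) _.
rewrite -{2}(divfK (lt0r_neq0 X0) e) [X in _ <= X]mulrC.
by apply: ler_wpM2r; [rewrite divr_ge0 // ltW | lra].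
Qed.

Lemma RS_indef a b (f g W : R -> R) M : a <= b -> Wctrl a b g W -> ucont a b W ->
  Reg a b W f M ->
  (forall t, a <= t -> t <= b -> is_RS f g a t (RSint f g a t)) /\
  Reg a b W (fun t => RSint f g a t) (M * (1 + (W b - W a))).
Proof.
move=> ab gW Wc hR.
have M0 := Reg_M0 ab hR; have fc := Reg_ucont ab hR Wc.
have Wab : 0 <= W b - W a by apply: le_trans (gW _ _ _ _ _); rewrite ?lexx.
have Ht t : a <= t -> t <= b -> is_RS f g a t (RSint f g a t).
  move=> h1 h2; apply: xgetPex; apply: (RS_exists h1 (W := W)).
    exact: Wctrl_sub gW.
  exact: ucont_sub fc.
have [fB fL] := hR.
have Hb t : a <= t -> t <= b -> `|RSint f g a t| <= M * (W t - W a).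
  move=> h1 h2; apply/ler_addgt0Pr => e e0.
  have [d d0 Hd] := Ht t h1 h2 e e0.
  have [n [x P]] := part_ex h1 d0.
  have HS := Hd _ _ _ P.
  have HB : `|RS_sum f g n x x| <= M * (W t - W a).
    apply: (RS_sum_bound (W := W)) P; first exact: Wctrl_sub gW.
    by move=> u h3 h4; apply: fB => //; lra.
  rewrite -[RSint _ _ _ _](subrKC (RS_sum f g n x x)).
  apply: le_trans (ler_normD _ _) _; rewrite distrC in HS.
  by apply: lerD => //; apply: ltW.
split => //; split.
  move=> u h1 h2; apply: le_trans (Hb u h1 h2) _.
  have : W u - W a <= W b - W a by have := gW u b h1 h2 (lexx b); have := normr_ge0 (g b - g u); lra.
  by move=> h; apply: ler_wpM2l => //; lra.
move=> u v h1 h2 h3.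
have Wuv : 0 <= W v - W u by apply: le_trans (gW _ _ _ _ _); rewrite ?lexx //; lra.
have key : `|RSint f g a v - RSint f g a u| <= M * (W v - W u).
  apply/ler_addgt0Pr => e e0; have e20 : 0 < e / 2 by rewrite divr_gt0.
  have [d1 d10 Hd1] := Ht u h1 (le_trans h2 h3) _ e20.
  have [d2 d20 Hd2] := Ht v (le_trans h1 h2) h3 _ e20.
  have dm0 : 0 < Num.min d1 d2 by rewrite lt_min d10 d20.
  have [n1 [x1 P1]] := part_ex h1 dm0.
  have [n2 [x2 P2]] := part_ex h2 dm0.
  have [P E] := tp_cat P1 P2.
  have m1 : Num.min d1 d2 <= d1 by rewrite ge_min lexx.
  have m2 : Num.min d1 d2 <= d2 by rewrite ge_min lexx orbT.
  have HS1 := Hd1 _ _ _ (tp_le m1 P1).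
  have HS := Hd2 _ _ _ (tp_le m2 P); rewrite E in HS.
  have HB : `|RS_sum f g n2 x2 x2| <= M * (W v - W u).
    apply: (RS_sum_bound (W := W)) P2; first by apply: Wctrl_sub gW => //; lra.
    by move=> w h4 h5; apply: fB => //; lra.
  set S1 := RS_sum f g n1 x1 x1 in HS1 HS *; set S2 := RS_sum f g n2 x2 x2 in HS HB *.
  have -> : RSint f g a v - RSint f g a u =
     (S1 - RSint f g a u) - (S1 + S2 - RSint f g a v) + S2 by ring.
  apply: le_trans (ler_normD _ _) _.
  apply: le_trans (lerD (ler_normB _ _) (lexx _)) _.
  have := splitr e; lra.
apply: le_trans key _; rewrite [M * (1 + _)]mulrDr mulr1 mulrDl.
have := mulr_ge0 (mulr_ge0 M0 Wab) Wuv; lra.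
Qed.

End RS.

Section Gen.
Variable R : realType.

Lemma common_delta (I : finType) (G : I -> R -> Prop) :
  (forall i d d', 0 < d' -> d' <= d -> G i d -> G i d') ->
  (forall i, exists2 d, 0 < d & G i d) -> exists2 d, 0 < d & forall i, G i d.
Proof.
move=> Gm Ge.
suff: forall s : seq I, exists2 d, 0 < d & forall i, i \in s -> G i d.
  by case/(_ (enum I)) => d d0 H; exists d => // i; apply: H; rewrite mem_enum.
elim => [|j s [d d0 H]]; first by exists 1.
have [dj dj0 Hj] := Ge j.
have m0 : 0 < Num.min d dj by rewrite lt_min d0 dj0.
exists (Num.min d dj) => // i; rewrite inE => /orP[/eqP ->|iin].
  by apply: Gm Hj => //; rewrite ge_min lexx orbT.
by apply: Gm (H i iin) => //; rewrite ge_min lexx.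
Qed.

Lemma big_tuple_cons (T : finType) n (F : n.+1.-tuple T -> R) :
  \sum_(t : n.+1.-tuple T) F t = \sum_(x : T) \sum_(t : n.-tuple T) F [tuple of x :: t].
Proof.
rewrite pair_big /=.
rewrite (reindex (fun p : T * n.-tuple T => [tuple of p.1 :: p.2])) //=.
exists (fun t => (thead t, [tuple of behead t])).
  by move=> [x t] _ /=; rewrite theadE; congr (_, _); apply: val_inj.
by move=> t _; case: t / tupleP => x t /=; apply: val_inj; rewrite /= theadE.
Qed.

Lemma pow_convex (A B : R) k : 0 <= A -> A <= B ->
  k.+1%:R * (A ^+ k * (B - A)) <= B ^+ k.+1 - A ^+ k.+1.
Proof.
move=> A0 AB; rewrite subrXX /=.
rewrite (_ : k.+1%:R * (A ^+ k * (B - A)) = (B - A) * \sum_(i < k.+1) A ^+ k); last first.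
  by rewrite sumr_const card_ord -mulr_natr; ring.
apply: ler_wpM2l; first lra.
apply: ler_sum => i _.
have ik : (i <= k)%N by rewrite -ltnS.
rewrite -{1}(subnK ik) exprD; apply: ler_wpM2r; first exact: exprn_ge0.
by apply: lerXn2r => //; rewrite nnegrE //; lra.
Qed.

End Gen.

Section Sig.
Variables (R : realType) (d : nat) (a b : R) (g : R -> 'rV[R]_d) (W : R -> R).
Hypotheses (ab : a <= b) (Wc : ucont a b W) (W0 : W a = 0)
  (gW : forall u v, a <= u -> u <= v -> v <= b ->
     \sum_(c < d) `|coordp g c v - coordp g c u| <= W v - W u).

Lemma gWc c : Wctrl a b (coordp g c) W.
Proof.
move=> u v h1 h2 h3; apply: le_trans (gW h1 h2 h3).
rewrite (bigD1 c) //= lerDl; apply: sumr_ge0 => *; exact: normr_ge0.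
Qed.

Lemma W_mono u v : a <= u -> u <= v -> v <= b -> W u <= W v.
Proof.
move=> h1 h2 h3; have := gW h1 h2 h3.
have : 0 <= \sum_(c < d) `|coordp g c v - coordp g c u|.
  by apply: sumr_ge0 => *; exact: normr_ge0.
lra.
Qed.

Lemma W_ge0 u : a <= u -> u <= b -> 0 <= W u.
Proof. by move=> h1 h2; rewrite -W0; apply: W_mono. Qed.

Lemma sig_reg l : exists M, Reg a b W (sigrev g a l) M.
Proof.
elim: l => [|c l [M HM]].
  exists 1; split => [u _ _|u v h1 h2 h3] /=; first by rewrite normr1.
  rewrite subrr normr0 mul1r subr_ge0; exact: W_mono.
exists (M * (1 + (W b - W a))).
exact: (RS_indef ab (gWc c) Wc HM).2.
Qed.

Lemma sig_RS l c t : a <= t -> t <= b ->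
  is_RS (sigrev g a l) (coordp g c) a t (sigrev g a (c :: l) t).
Proof.
have [M HM] := sig_reg l.
exact: (RS_indef ab (gWc c) Wc HM).1.
Qed.

Lemma sig_fact k : forall u, a <= u -> u <= b ->
  \sum_(w : k.-tuple 'I_d) `|sigrev g a w u| <= W u ^+ k / (k`!)%:R.
Proof.
elim: k => [|k IH] u h1 h2.
  rewrite expr0 fact0 divr1.
  rewrite (eq_bigr (fun _ => 1)); last by move=> w _; rewrite tuple0 /= normr1.
  by rewrite sumr_const card_tuple expn0.
rewrite big_tuple_cons /=.
apply/ler_addgt0Pr => e e0.
set N := (#|{: k.-tuple 'I_d}| * #|{: 'I_d}|)%N.
have N0 : 0 < N%:R + 1 :> R by have := ler0n R N; lra.
set e' := e / (N%:R + 1).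
have e'0 : 0 < e' by rewrite divr_gt0.
pose G (p : 'I_d * k.-tuple 'I_d) dl := forall n x xi, tagged_partition a u dl n x xi ->
  `|RS_sum (sigrev g a p.2) (coordp g p.1) n x xi - sigrev g a (p.1 :: p.2) u| < e'.
have [dl dl0 Hdl] : exists2 dl, 0 < dl & forall p, G p dl.
  apply: common_delta.
    by move=> p dl dl' _ hle HG n x xi P; apply: HG; exact: tp_le hle P.
  by move=> p; exact: (sig_RS p.2 p.1 h1 h2 e'0).
have [n [x P]] := part_ex h1 dl0.
have [x0 [xn HP]] := P.
have xb i : (i <= n)%N -> a <= x i /\ x i <= b.
  by move=> iN; have [t1 t2] := tp_bnd P iN; split => //; lra.
have step1 : \sum_(c < d) \sum_(w : k.-tuple 'I_d) `|sigrev g a (c :: w) u| <=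
    \sum_(c < d) \sum_(w : k.-tuple 'I_d)
      (`|RS_sum (sigrev g a w) (coordp g c) n x x| + e').
  apply: ler_sum => c _; apply: ler_sum => w _.
  have H := Hdl (c, w) n x x P; rewrite /= in H.
  rewrite -[X in `|X|](subrKC (RS_sum (sigrev g a w) (coordp g c) n x x)).
  apply: le_trans (ler_normD _ _) _; rewrite distrC in H.
  by apply: lerD => //; apply: ltW.
have step2 : \sum_(c < d) \sum_(w : k.-tuple 'I_d) e' <= e.
  rewrite (eq_bigr (fun _ => e' *+ #|{: k.-tuple 'I_d}|)); last by move=> c _; rewrite sumr_const.
  rewrite sumr_const card_ord -mulrnA -/N -mulr_natr /e' mulrAC ler_pdivrMr //.
  apply: ler_wpM2l; [exact: ltW | rewrite /N card_ord; lra].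
have step3 : \sum_(c < d) \sum_(w : k.-tuple 'I_d)
      `|RS_sum (sigrev g a w) (coordp g c) n x x| <= W u ^+ k.+1 / (k.+1`!)%:R.
  apply: le_trans (_ : \sum_(c < d) \sum_(w : k.-tuple 'I_d) \sum_(i < n)
     `|sigrev g a w (x i)| * `|coordp g c (x i.+1) - coordp g c (x i)| <= _).
    apply: ler_sum => c _; apply: ler_sum => w _.
    by apply: le_trans (ler_norm_sum _ _ _) _; apply: ler_sum => i _; rewrite normrM.
  under eq_bigr do rewrite exchange_big.
  rewrite exchange_big /=.
  under eq_bigr do under eq_bigr do rewrite -mulr_suml.
  under eq_bigr do rewrite -mulr_sumr.
  apply: le_trans (_ : \sum_(i < n) (W (x i.+1) ^+ k.+1 - W (x i) ^+ k.+1) / (k.+1`!)%:R <= _);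
    last first.
    by rewrite -mulr_suml (sum_tele (fun i => W (x i) ^+ k.+1)) xn x0 W0 expr0n subr0.
  apply: ler_sum => i _.
  have [ia ib] := xb i (ltnW (ltn_ord i)); have [ia' ib'] := xb i.+1 (ltn_ord i).
  have [hx _] := HP i (ltn_ord i).
  have A0 := W_ge0 ia ib; have AB := W_mono ia hx ib'.
  apply: le_trans (_ : W (x i) ^+ k / (k`!)%:R * (W (x i.+1) - W (x i)) <= _).
    apply: ler_pM.
    - by apply: sumr_ge0 => *; exact: normr_ge0.
    - by apply: sumr_ge0 => *; exact: normr_ge0.
    - exact: IH.
    - exact: (gW ia hx ib').
  have hc := pow_convex k A0 AB.
  have f0 : (k`!)%:R != 0 :> R by rewrite pnatr_eq0 -lt0n fact_gt0.
  have k0 : k.+1%:R != 0 :> R by rewrite pnatr_eq0.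
  rewrite factS natrM.
  rewrite (_ : W (x i) ^+ k / (k`!)%:R * (W (x i.+1) - W (x i)) =
     (k.+1%:R * (W (x i) ^+ k * (W (x i.+1) - W (x i)))) / (k.+1%:R * (k`!)%:R)); last first.
    by field; rewrite f0 /=; rewrite -natr1 addrC in k0; rewrite k0.
  apply: ler_wpM2r => //; rewrite invr_ge0 mulr_ge0 //.
apply: le_trans step1 _.
under eq_bigr do rewrite big_split /=.
rewrite big_split /=; exact: lerD.
Qed.

End Sig.

Section Gen2.
Variable R : realType.

Lemma RS_prod (fa ga fb gb : R -> R) a s c t al be :
  is_RS fa ga a s al -> is_RS fb gb c t be ->
  forall e, 0 < e -> exists2 dl, 0 < dl & forall n x xi m y eta,
    tagged_partition a s dl n x xi -> tagged_partition c t dl m y eta ->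
    `|RS_sum fa ga n x xi * RS_sum fb gb m y eta - al * be| < e.
Proof.
move=> Ha Hb e e0.
set K := `|al| + `|be| + 1.
have K0 : 0 < K by rewrite /K; have := normr_ge0 al; have := normr_ge0 be; lra.
set eta0 := Num.min 1 (e / 2 / K).
have h10 : 0 < e / 2 / K by rewrite !divr_gt0.
have et0 : 0 < eta0 by rewrite lt_min ltr01 h10.
have et1 : eta0 <= 1 by rewrite ge_min lexx.
have et2 : eta0 * K <= e / 2.
  by rewrite -ler_pdivlMr // ge_min lexx orbT.
have [d1 d10 H1] := Ha _ et0; have [d2 d20 H2] := Hb _ et0.
have m0 : 0 < Num.min d1 d2 by rewrite lt_min d10 d20.
have mm1 : Num.min d1 d2 <= d1 by rewrite ge_min lexx.
have mm2 : Num.min d1 d2 <= d2 by rewrite ge_min lexx orbT.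
exists (Num.min d1 d2) => // n x xi m y eta P Q.
have hA := H1 _ _ _ (tp_le mm1 P).
have hB := H2 _ _ _ (tp_le mm2 Q).
set A := RS_sum fa ga n x xi in hA *; set B := RS_sum fb gb m y eta in hB *.
have -> : A * B - al * be = (A - al) * (B - be) + (A - al) * be + al * (B - be) by ring.
set X := `|A - al| in hA; set Y := `|B - be| in hB.
have X0 : 0 <= X := normr_ge0 _; have Y0 : 0 <= Y := normr_ge0 _.
have h1 : X * Y <= eta0 by apply: le_trans (_ : X * 1 <= _); [apply: ler_wpM2l => //; lra | rewrite mulr1; lra].
have h2 : X * `|be| <= eta0 * `|be| by apply: ler_wpM2r => //; lra.
have h3 : `|al| * Y <= `|al| * eta0 by apply: ler_wpM2l => //; lra.
apply: le_lt_trans (ler_normD _ _) _.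
apply: le_lt_trans (lerD (ler_normD _ _) (lexx _)) _.
rewrite !normrM -/X -/Y.
move: et2; rewrite /K => et2.
have : e / 2 < e by rewrite ltr_pdivrMr //; lra.
lra.
Qed.

End Gen2.

Section Kernel.
Variables (R : realType) (d : nat) (a b : R) (ga si : R -> 'rV[R]_d) (W : R -> R).
Hypotheses (ab : a <= b) (Wc : ucont a b W) (W0 : W a = 0)
  (gWa : forall u v, a <= u -> u <= v -> v <= b ->
     \sum_(c < d) `|coordp ga c v - coordp ga c u| <= W v - W u)
  (gWs : forall u v, a <= u -> u <= v -> v <= b ->
     \sum_(c < d) `|coordp si c v - coordp si c u| <= W v - W u).

Lemma sig_inner_rev k u v : sig_inner ga si a u v k =
  \sum_(w : k.-tuple 'I_d) sigrev ga a w u * sigrev si a w v.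
Proof.
rewrite /sig_inner (reindex (fun w : k.-tuple 'I_d => [tuple of rev w])) /=.
  by apply: eq_bigr => w _; rewrite /sig /= revK.
by exists (fun w : k.-tuple 'I_d => [tuple of rev w]) => w _; apply: val_inj; rewrite /= revK.
Qed.

Lemma sum_prod_le (I : finType) (F G : I -> R) : (forall i, 0 <= F i) -> (forall i, 0 <= G i) ->
  \sum_i F i * G i <= (\sum_i F i) * (\sum_i G i).
Proof.
move=> F0 G0; rewrite mulr_suml; apply: ler_sum => i _; apply: ler_wpM2l => //.
by rewrite (bigD1 i) //= lerDl; apply: sumr_ge0.
Qed.

Lemma sig_inner_bound k u v : a <= u -> u <= b -> a <= v -> v <= b ->
  `|sig_inner ga si a u v k| <= (W u ^+ k / (k`!)%:R) * (W v ^+ k / (k`!)%:R).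
Proof.
move=> h1 h2 h3 h4; rewrite sig_inner_rev.
apply: le_trans (ler_norm_sum _ _ _) _.
under eq_bigr do rewrite normrM.
apply: le_trans (sum_prod_le _ _) _ => //.
apply: ler_pM; try by apply: sumr_ge0.
  exact: (sig_fact ab Wc W0 gWa).
exact: (sig_fact ab Wc W0 gWs).
Qed.

Definition DS (F : R -> R -> R) n (x xi : nat -> R) m (y eta : nat -> R) :=
  \sum_(i < n) \sum_(j < m)
    F (xi i) (eta j) * dotV (ga (x i.+1) - ga (x i)) (si (y j.+1) - si (y j)).

Lemma dotV_coord (u u' v v' : R) : dotV (ga u' - ga u) (si v' - si v) =
  \sum_(c < d) (coordp ga c u' - coordp ga c u) * (coordp si c v' - coordp si c v).
Proof. by apply: eq_bigr => c _; rewrite !mxE. Qed.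

Lemma DS_diff (F G : R -> R -> R) e dl s t n x xi m y eta :
  s <= b -> t <= b ->
  tagged_partition a s dl n x xi -> tagged_partition a t dl m y eta ->
  (forall u v, a <= u -> u <= s -> a <= v -> v <= t -> `|F u v - G u v| <= e) ->
  `|DS F n x xi m y eta - DS G n x xi m y eta| <= e * (W s * W t).
Proof.
move=> sb tb P Q FG.
have [x0 [xn HP]] := P; have [y0 [ym HQ]] := Q.
have e0 : 0 <= e.
  have [_ aa] := tp_bnd P (leq0n n); rewrite x0 in aa.
  have [_ ta] := tp_bnd Q (leq0n m); rewrite y0 in ta.
  exact: le_trans (normr_ge0 _) (FG a a (lexx a) aa (lexx a) ta).
have -> : W s * W t = \sum_(i < n) \sum_(j < m)
    (W (x i.+1) - W (x i)) * (W (y j.+1) - W (y j)).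
  have Es : W s = \sum_(i < n) (W (x i.+1) - W (x i)).
    by rewrite (sum_tele (fun i => W (x i))) xn x0 W0 subr0.
  have Et : W t = \sum_(j < m) (W (y j.+1) - W (y j)).
    by rewrite (sum_tele (fun j => W (y j))) ym y0 W0 subr0.
  rewrite Es Et.
  by rewrite mulr_suml; apply: eq_bigr => i _; rewrite mulr_sumr.
rewrite /DS -sumrB mulr_sumr; apply: le_trans (ler_norm_sum _ _ _) _; apply: ler_sum => i _.
rewrite -sumrB mulr_sumr; apply: le_trans (ler_norm_sum _ _ _) _; apply: ler_sum => j _.
rewrite -mulrBl normrM.
have [xa _] := tp_bnd P (ltnW (ltn_ord i)); have [_ xs] := tp_bnd P (ltn_ord i).
have [ya _] := tp_bnd Q (ltnW (ltn_ord j)); have [_ yt] := tp_bnd Q (ltn_ord j).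
have [hx [t1 t2]] := HP i (ltn_ord i); have [hy [t3 t4]] := HQ j (ltn_ord j).
apply: ler_pM => //.
  by apply: FG; lra.
rewrite dotV_coord; apply: le_trans (ler_norm_sum _ _ _) _.
under eq_bigr do rewrite normrM.
apply: le_trans (sum_prod_le _ _) _ => //.
apply: ler_pM; try by apply: sumr_ge0.
  by apply: gWa => //; lra.
by apply: gWs => //; lra.
Qed.

Lemma prod_sums (I J : finType) (F : I -> R) (G : J -> R) :
  (\sum_i F i) * (\sum_j G j) = \sum_i \sum_j F i * G j.
Proof. by rewrite mulr_suml; apply: eq_bigr => i _; rewrite mulr_sumr. Qed.

Lemma DS_expand k n x xi m y eta :
  \sum_(c < d) \sum_(w : k.-tuple 'I_d) (RS_sum (sigrev ga a w) (coordp ga c) n x xi *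
      RS_sum (sigrev si a w) (coordp si c) m y eta)
  = DS (fun u v => \sum_(w : k.-tuple 'I_d) sigrev ga a w u * sigrev si a w v) n x xi m y eta.
Proof.
rewrite /RS_sum.
under eq_bigr do under eq_bigr do rewrite prod_sums.
rewrite exchange_big /=.
under eq_bigr do rewrite exchange_big /=.
under eq_bigr do under eq_bigr do rewrite exchange_big /=.
rewrite exchange_big /=.
under eq_bigr do rewrite exchange_big /=.
rewrite /DS; apply: eq_bigr => i _; apply: eq_bigr => j _.
rewrite dotV_coord prod_sums; apply: eq_bigr => w _; apply: eq_bigr => c _.
ring.
Qed.

Lemma term_RS2 k s t : a <= s -> s <= b -> a <= t -> t <= b ->
  is_RS2 (fun u v => sig_inner ga si a u v k) ga si a s a t (sig_inner ga si a s t k.+1).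
Proof.
move=> h1 h2 h3 h4 e e0.
rewrite sig_inner_rev big_tuple_cons /=.
set N := (#|{: k.-tuple 'I_d}| * d)%N.
have N0 : 0 < N%:R + 1 :> R by have := ler0n R N; lra.
set e' := e / (N%:R + 1).
have e'0 : 0 < e' by rewrite divr_gt0.
pose G (p : 'I_d * k.-tuple 'I_d) dl := forall n x xi m y eta,
  tagged_partition a s dl n x xi -> tagged_partition a t dl m y eta ->
  `|RS_sum (sigrev ga a p.2) (coordp ga p.1) n x xi *
    RS_sum (sigrev si a p.2) (coordp si p.1) m y eta -
    sigrev ga a (p.1 :: p.2) s * sigrev si a (p.1 :: p.2) t| < e'.
have [dl dl0 Hdl] : exists2 dl, 0 < dl & forall p, G p dl.
  apply: common_delta.
    move=> p dl dl' _ hle HG n x xi m y eta P Q; apply: HG.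
      exact: tp_le hle P.
    exact: tp_le hle Q.
  move=> p; apply: RS_prod => //.
    exact: (sig_RS ab Wc gWa p.2 p.1 h1 h2).
  exact: (sig_RS ab Wc gWs p.2 p.1 h3 h4).
exists dl => // n x xi m y eta P Q.
suff: `|DS (fun u v => sig_inner ga si a u v k) n x xi m y eta -
   \sum_(c < d) \sum_(w : k.-tuple 'I_d)
      sigrev ga a (c :: w) s * sigrev si a (c :: w) t| < e by [].
have -> : DS (fun u v => sig_inner ga si a u v k) n x xi m y eta =
   DS (fun u v => \sum_(w : k.-tuple 'I_d) sigrev ga a w u * sigrev si a w v) n x xi m y eta.
  by rewrite /DS; apply: eq_bigr => i _; apply: eq_bigr => j _; rewrite sig_inner_rev.
rewrite -DS_expand -sumrB.
apply: le_lt_trans (ler_norm_sum _ _ _) _.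
apply: le_lt_trans (_ : \sum_(c < d) \sum_(w : k.-tuple 'I_d) e' < e).
  apply: ler_sum => c _; rewrite -sumrB.
  apply: le_trans (ler_norm_sum _ _ _) _; apply: ler_sum => w _.
  exact: ltW (Hdl (c, w) n x xi m y eta P Q).
rewrite (eq_bigr (fun _ => e' *+ #|{: k.-tuple 'I_d}|)); last by move=> c _; rewrite sumr_const.
rewrite sumr_const card_ord -mulrnA -/N -mulr_natr /e' mulrAC ltr_pdivrMr //.
rewrite mulrDr mulr1 ltrDl //.
Qed.

End Kernel.

Section Gen3.
Variable R : realType.

Lemma series_abs_cvg (u m : nat -> R) : (forall k, `|u k| <= m k) -> cvgn (series m) ->
  cvgn (series u).
Proof.
move=> H cm; apply: normed_cvg.
apply: (series_le_cvg (v_ := m)) => // k; first exact: normr_ge0.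
exact: le_trans (normr_ge0 _) (H k).
Qed.

Lemma limB_cst (f : nat -> R) c : cvgn f -> limn (fun M => f M - c) = limn f - c.
Proof.
move=> cf; apply: cvg_lim => //.
by apply: cvgB => //; apply: cvg_cst.
Qed.

Lemma limBr_cst (f : nat -> R) c : cvgn f -> limn (fun M => c - f M) = c - limn f.
Proof.
move=> cf; apply: cvg_lim => //.
by apply: cvgB => //; apply: cvg_cst.
Qed.

Lemma tail_bound (u m : nat -> R) N : (forall k, `|u k| <= m k) -> cvgn (series m) ->
  `|limn (series u) - series u N| <= limn (series m) - series m N.
Proof.
move=> H cm; have cu := series_abs_cvg H cm.
have key M : (N <= M)%N -> `|series u M - series u N| <= series m M - series m N.
  move=> NM; rewrite !sub_series NM.
  apply: le_trans (ler_norm_sum _ _ _) _; exact: ler_sum.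
rewrite ler_norml; apply/andP; split.
  rewrite opprB -limBr_cst // -limB_cst //.
  apply: ler_lim.
  - by apply: is_cvgB => //; apply: is_cvg_cst.
  - by apply: is_cvgB => //; apply: is_cvg_cst.
  exists N => // M /= NM; have := key M NM; rewrite ler_norml => /andP[h1 h2]; lra.
rewrite -limB_cst // -limB_cst //.
apply: ler_lim.
- by apply: is_cvgB => //; apply: is_cvg_cst.
- by apply: is_cvgB => //; apply: is_cvg_cst.
exists N => // M /= NM; have := key M NM; rewrite ler_norml => /andP[h1 h2]; lra.
Qed.

End Gen3.

Section Main.
Variables (R : realType) (d : nat) (a b : R) (ga si : R -> 'rV[R]_d) (W : R -> R).
Hypotheses (ab : a <= b) (Wc : ucont a b W) (W0 : W a = 0)
  (gWa : forall u v, a <= u -> u <= v -> v <= b ->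
     \sum_(c < d) `|coordp ga c v - coordp ga c u| <= W v - W u)
  (gWs : forall u v, a <= u -> u <= v -> v <= b ->
     \sum_(c < d) `|coordp si c v - coordp si c u| <= W v - W u).

Lemma is_RS2_add (F1 F2 : R -> R -> R) I1 I2 s t :
  is_RS2 F1 ga si a s a t I1 -> is_RS2 F2 ga si a s a t I2 ->
  is_RS2 (fun u v => F1 u v + F2 u v) ga si a s a t (I1 + I2).
Proof.
move=> H1 H2 e e0; have e20 : 0 < e / 2 by rewrite divr_gt0.
have [d1 d10 Hd1] := H1 _ e20; have [d2 d20 Hd2] := H2 _ e20.
have mm1 : Num.min d1 d2 <= d1 by rewrite ge_min lexx.
have mm2 : Num.min d1 d2 <= d2 by rewrite ge_min lexx orbT.
exists (Num.min d1 d2); first by rewrite lt_min d10 d20.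
move=> n x xi m y eta P Q.
have h1 : `|DS ga si F1 n x xi m y eta - I1| < e / 2 := Hd1 _ _ _ _ _ _ (tp_le mm1 P) (tp_le mm1 Q).
have h2 : `|DS ga si F2 n x xi m y eta - I2| < e / 2 := Hd2 _ _ _ _ _ _ (tp_le mm2 P) (tp_le mm2 Q).
suff: `|DS ga si (fun u v => F1 u v + F2 u v) n x xi m y eta - (I1 + I2)| < e by [].
have -> : DS ga si (fun u v => F1 u v + F2 u v) n x xi m y eta =
   DS ga si F1 n x xi m y eta + DS ga si F2 n x xi m y eta.
  rewrite /DS -big_split /=; apply: eq_bigr => i _.
  by rewrite -big_split /=; apply: eq_bigr => j _; rewrite mulrDl.
set D1 := DS ga si F1 n x xi m y eta in h1 *; set D2 := DS ga si F2 n x xi m y eta in h2 *.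
have -> : D1 + D2 - (I1 + I2) = (D1 - I1) + (D2 - I2) by ring.
apply: le_lt_trans (ler_normD _ _) _.
by rewrite (splitr e); apply: ltrD.
Qed.

Lemma is_RS2_scale c (F : R -> R -> R) I s t :
  is_RS2 F ga si a s a t I -> is_RS2 (fun u v => c * F u v) ga si a s a t (c * I).
Proof.
move=> H e e0.
have c0 : 0 < `|c| + 1 by have := normr_ge0 c; lra.
have e'0 : 0 < e / (`|c| + 1) by rewrite divr_gt0.
have [dl dl0 Hd] := H _ e'0; exists dl => // n x xi m y eta P Q.
have h : `|DS ga si F n x xi m y eta - I| < e / (`|c| + 1) := Hd _ _ _ _ _ _ P Q.
suff: `|DS ga si (fun u v => c * F u v) n x xi m y eta - c * I| < e by [].
have -> : DS ga si (fun u v => c * F u v) n x xi m y eta = c * DS ga si F n x xi m y eta.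
  rewrite /DS mulr_sumr; apply: eq_bigr => i _.
  by rewrite mulr_sumr; apply: eq_bigr => j _; rewrite mulrA.
rewrite -mulrBr normrM.
apply: le_lt_trans (_ : `|c| * (e / (`|c| + 1)) < e).
  by apply: ler_wpM2l => //; apply: ltW.
rewrite mulrC -mulrA gtr_pMr // ltr_pdivrMl // mulr1; lra.
Qed.

Let C := W b ^+ 2 + 1.

Lemma C0 : 0 < C.
Proof. by rewrite /C; have := sqr_ge0 (W b); lra. Qed.

Lemma term_le (psi : nat -> R) k u v : a <= u -> u <= b -> a <= v -> v <= b ->
  `|sig_kernel_terms psi ga si a u v k| <= C ^+ k * `|psi k| / ((k`!)%:R ^+ 2).
Proof.
move=> h1 h2 h3 h4; rewrite /sig_kernel_terms normrM.
have Hb := sig_inner_bound ab Wc W0 gWa gWs k h1 h2 h3 h4.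
have Wu0 := W_ge0 W0 gWa h1 h2; have Wv0 := W_ge0 W0 gWa h3 h4.
have Wub := W_mono gWa h1 h2 (lexx b); have Wvb := W_mono gWa h3 h4 (lexx b).
have f0 : 0 < (k`!)%:R :> R by rewrite ltr0n fact_gt0.
have E : W u ^+ k / (k`!)%:R * (W v ^+ k / (k`!)%:R) = (W u * W v) ^+ k / ((k`!)%:R ^+ 2).
  by rewrite exprMn expr2 invfM; ring.
rewrite E in Hb.
rewrite mulrC -mulrA [`|psi k| / _]mulrC mulrA.
apply: ler_wpM2r; first exact: normr_ge0.
apply: le_trans Hb _; apply: ler_wpM2r; first by rewrite invr_ge0 exprn_ge0 // ltW.
apply: lerXn2r.
- by rewrite nnegrE mulr_ge0.
- by rewrite nnegrE ltW // C0.
rewrite /C; have : W u * W v <= W b * W b by apply: ler_pM.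
by rewrite -expr2; lra.
Qed.

Lemma sig_inner0 u v : sig_inner ga si a u v 0 = 1.
Proof.
rewrite /sig_inner (eq_bigr (fun _ => 1)); last by move=> w _; rewrite tuple0 /sig /= mulr1.
by rewrite sumr_const card_tuple expn0.
Qed.

Lemma RS2_partial (phi : nat -> R) N s t : a <= s -> s <= b -> a <= t -> t <= b ->
  is_RS2 (fun u v => series (sig_kernel_terms (phi_shift phi) ga si a u v) N) ga si a s a t
    (series (fun k => sig_kernel_terms phi ga si a s t k.+1) N).
Proof.
move=> h1 h2 h3 h4; elim: N => [|N IH].
  have -> : (fun u v => series (sig_kernel_terms (phi_shift phi) ga si a u v) 0) = (fun _ _ => 0).
    by apply/funext => u; apply/funext => v; rewrite /series /= big_geq.
  rewrite /series /= big_geq // => e e0; exists 1 => // n x xi m y eta P Q.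
  suff: `|DS ga si (fun _ _ => 0) n x xi m y eta - 0| < e by [].
  rewrite /DS subr0 (eq_bigr (fun _ => 0)) ?big1 ?normr0 // => i _.
  by rewrite big1 // => j _; rewrite mul0r.
have -> : (fun u v => series (sig_kernel_terms (phi_shift phi) ga si a u v) N.+1) =
   (fun u v => series (sig_kernel_terms (phi_shift phi) ga si a u v) N +
      phi N.+1 * sig_inner ga si a u v N).
  by apply/funext => u; apply/funext => v; rewrite /series /= big_nat_recr.
rewrite /series /= big_nat_recr //=.
apply: is_RS2_add => //; apply: is_RS2_scale.
exact: (term_RS2 ab Wc gWa gWs N h1 h2 h3 h4).
Qed.

Lemma kcvg (psi : nat -> R) : growth_cond psi -> forall u v, a <= u -> u <= b -> a <= v -> v <= b ->
  cvgn (series (sig_kernel_terms psi ga si a u v)).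
Proof.
move=> hp u v h1 h2 h3 h4.
exact: (series_abs_cvg (fun k => term_le psi k h1 h2 h3 h4) (hp C C0)).
Qed.

Lemma main_abs (phi : nat -> R) : growth_cond phi -> growth_cond (phi_shift phi) ->
 (forall s t, s \in `[a, b] -> t \in `[a, b] ->
     cvgn (series (sig_kernel_terms phi ga si a s t)) /\
     cvgn (series (sig_kernel_terms (phi_shift phi) ga si a s t))) /\
  (forall s t, s \in `[a, b] -> t \in `[a, b] ->
     exists I : R,
       is_RS2 (fun u v => sig_kernel (phi_shift phi) ga si a u v)
              ga si a s a t I /\
       sig_kernel phi ga si a s t = phi 0%N + I).
Proof.
move=> hphi hphi1; split.
  move=> s t; rewrite !in_itv /= => /andP[h1 h2] /andP[h3 h4].
  by split; apply: kcvg.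
move=> s t; rewrite !in_itv /= => /andP[h1 h2] /andP[h3 h4].
set U := sig_kernel_terms phi ga si a s t.
have cU : cvgn (series U) by apply: kcvg.
pose V := fun k => U k.+1.
have sV : series V = fun N => series U N.+1 - U 0%N.
  apply/funext => N; rewrite /series /= big_nat_recl //=; ring.
have cU' : series U n.+1 @[n --> \oo] --> limn (series U) by rewrite cvg_shiftS.
have cV : series V @ \oo --> limn (series U) - U 0%N.
  by rewrite sV; apply: cvgB => //; apply: cvg_cst.
have U0 : U 0%N = phi 0%N by rewrite /U /sig_kernel_terms sig_inner0 mulr1.
have limV : limn (series V) = limn (series U) - U 0%N by apply: cvg_lim.
exists (limn (series V)); split; last first.
  by rewrite limV U0 /sig_kernel -/U; ring.
move=> e e0.
have e30 : 0 < e / 3 by rewrite divr_gt0.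
set B2 := W s * W t.
have B20 : 0 <= B2 by rewrite mulr_ge0 // (W_ge0 W0 gWa).
have eps0 : 0 < e / 3 / (B2 + 1) by rewrite divr_gt0 //; lra.
set eps := e / 3 / (B2 + 1) in eps0.
pose m1 k := C ^+ k * `|phi_shift phi k| / ((k`!)%:R ^+ 2).
have cm1 : cvgn (series m1) := hphi1 C C0.
have cm1' : series m1 @ \oo --> limn (series m1) by apply: cm1.
move/cvgrPdist_lt: cm1' => /(_ _ eps0) [N0 _ HN0].
move/cvgrPdist_lt: cV => /(_ _ e30) [N1 _ HN1].
set N := maxn N0 N1.
have [dl dl0 Hdl] := RS2_partial phi N h1 h2 h3 h4 e30.
exists dl => // n x xi m y eta P Q.
set F := fun u v => sig_kernel (phi_shift phi) ga si a u v.
set FN := fun u v => series (sig_kernel_terms (phi_shift phi) ga si a u v) N.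
have hA : `|DS ga si F n x xi m y eta - DS ga si FN n x xi m y eta| <= eps * B2.
  apply: (DS_diff W0 gWa gWs h2 h4 P Q) => u v k1 k2 k3 k4.
  rewrite /F /FN /sig_kernel.
  have hu2 : u <= b by lra.
  have hv2 : v <= b by lra.
  apply: le_trans (tail_bound N (fun k => term_le (phi_shift phi) k k1 hu2 k3 hv2) cm1) _.
  have := HN0 N (leq_maxl _ _).
  by move=> h; apply: le_trans (ler_norm _) (ltW h).
have hB : `|DS ga si FN n x xi m y eta - series V N| < e / 3 := Hdl _ _ _ _ _ _ P Q.
have hC : `|(limn (series U) - U 0%N) - series V N| < e / 3 := HN1 N (leq_maxr _ _).
rewrite -limV in hC.
have hE : eps * B2 <= e / 3.
  have E3 : eps * (B2 + 1) = e / 3 by rewrite /eps divfK // lt0r_neq0 //; lra.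
  rewrite -E3; apply: ler_wpM2l; [exact: ltW | lra].
suff: `|DS ga si F n x xi m y eta - limn (series V)| < e by [].
set D1 := DS ga si F n x xi m y eta in hA *; set D2 := DS ga si FN n x xi m y eta in hA hB.
have -> : D1 - limn (series V) = (D1 - D2) + (D2 - series V N) - (limn (series V) - series V N) by ring.
apply: le_lt_trans (ler_normB _ _) _.
apply: le_lt_trans (lerD (ler_normD _ _) (lexx _)) _.
lra.
Qed.

End Main.

Section Heine.
Variable R : realType.

Lemma heine (a b : R) (f : R -> R) : {within `[a, b], continuous f} -> ucont a b f.
Proof.
move=> fc e e0.
have e20 : 0 < e / 2 by rewrite divr_gt0.
move/subspace_continuousP : fc => fc.
have cov := (compact_near_coveringP `[a, b]).1 (@segment_compact R a b).
pose P (dl : R) (x : R) := `[a, b]%classic x -> forall y, `[a, b]%classic y ->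
   `|x - y| < dl -> `|f x - f y| <= e.
have H : \forall dl \near (0:R)^'+, `[a, b]%classic `<=` P dl.
  apply: cov => x Kx.
  move/cvgrPdist_le: (fc x Kx) => /(_ _ e20).
  case/nbhs_ballP => eta /= eta0 Heta.
  have eta20 : 0 < eta / 2 by rewrite divr_gt0.
  near=> x' dl => Kx' y Ky hy.
  have h1 : `|x - x'| < eta / 2.
    by near: x'; have := near_ball x (eta / 2) eta20; rewrite -ball_normE.
  have h2 : dl < eta / 2 by near: dl; apply: nbhs_right_lt.
  have hy' : `|x - y| < eta.
    apply: le_lt_trans (ler_distD x' _ _) _; rewrite (splitr eta).
    by apply: ltrD => //; exact: lt_trans hy h2.
  have A1 : `|f x - f y| <= e / 2 by apply: Heta => //; rewrite -ball_normE.
  have A2 : `|f x - f x'| <= e / 2.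
    apply: Heta => //; rewrite -ball_normE /=.
    by apply: lt_trans h1 _; rewrite ltr_pdivrMr //; lra.
  apply: le_trans (ler_distD (f x) _ _) _; rewrite distrC (splitr e); lra.
have [dl [dl0 Hdl]] := filter_ex (filterI (nbhs_right_gt 0) H).
exists dl => // u v h1 h2 h3 h4 huv.
by apply: Hdl => //=; rewrite in_itv /=; apply/andP.
Unshelve. all: by end_near.
Qed.

End Heine.

Section Build.
Variable R : realType.

Lemma ucont_sum (a b : R) (I : finType) (F : I -> R -> R) :
  (forall i, ucont a b (F i)) -> ucont a b (fun t => \sum_i F i t).
Proof.
move=> H e e0.
have N0 : 0 < #|I|%:R + 1 :> R by have := ler0n R #|I|; lra.
have e'0 : 0 < e / (#|I|%:R + 1) by rewrite divr_gt0.
pose G i dl := forall u v, a <= u -> u <= b -> a <= v -> v <= b -> `|u - v| < dl ->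
   `|F i u - F i v| <= e / (#|I|%:R + 1).
have [dl dl0 Hdl] : exists2 dl, 0 < dl & forall i, G i dl.
  apply: common_delta.
    by move=> i dl dl' _ hle HG u v h1 h2 h3 h4 h5; apply: HG => //; lra.
  by move=> i; apply: H.
exists dl => // u v h1 h2 h3 h4 h5.
rewrite -sumrB; apply: le_trans (ler_norm_sum _ _ _) _.
apply: le_trans (_ : \sum_i e / (#|I|%:R + 1) <= _).
  by apply: ler_sum => i _; apply: Hdl.
rewrite sumr_const (_ : #|xpredT| = #|I|); last by apply: eq_card.
rewrite -[X in X <= _]mulr_natr mulrAC ler_pdivrMr // ler_wpM2l //; [exact: ltW | lra].
Qed.

Lemma ucont_add (a b : R) (f g : R -> R) : ucont a b f -> ucont a b g ->
  ucont a b (fun t => f t + g t).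
Proof.
move=> Hf Hg e e0; have e20 : 0 < e / 2 by rewrite divr_gt0.
have [d1 d10 H1] := Hf _ e20; have [d2 d20 H2] := Hg _ e20.
exists (Num.min d1 d2); first by rewrite lt_min d10 d20.
move=> u v h1 h2 h3 h4; rewrite lt_min => /andP[k1 k2].
have A := H1 u v h1 h2 h3 h4 k1; have B := H2 u v h1 h2 h3 h4 k2.
have -> : f u + g u - (f v + g v) = (f u - f v) + (g u - g v) by ring.
apply: le_trans (ler_normD _ _) _; rewrite (splitr e); exact: lerD.
Qed.

Lemma tv_ctrl (f : R -> R) a b u v : bounded_variation a b f ->
  a <= u -> u <= v -> v <= b ->
  `|f v - f u| <= fine (total_variation a v f) - fine (total_variation a u f).
Proof.
move=> H h1 h2 h3.
have av : a <= v by lra.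
have bav := bounded_variationl av h3 H.
have bau := bounded_variationl h1 h2 bav.
have buv := bounded_variationr h1 h2 bav.
have fau := (bounded_variationP f h1).1 bau.
have fuv := (bounded_variationP f h2).1 buv.
rewrite (total_variationD f h1 h2) fineD // addrAC subrr add0r.
by rewrite -lee_fin fineK //; apply: total_variation_ge.
Qed.

Lemma tv_ucont (f : R -> R) a b : a <= b -> {within `[a, b], continuous f} ->
  bounded_variation a b f -> ucont a b (fun t => fine (total_variation a t f)).
Proof.
move=> ab fc bv; case: (ltP a b) => ab'.
  exact: heine (total_variation_continuous ab' fc bv).
move=> e e0; exists 1 => // u v h1 h2 h3 h4 _.
have -> : u = a by lra.
have -> : v = a by lra.
by rewrite subrr normr0 ltW.
Qed.

Lemma coord_within (a b : R) d (g : R -> 'rV[R]_d) c :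
  {within `[a, b], continuous g} -> {within `[a, b], continuous (coordp g c)}.
Proof.
move=> gc x; apply: (@continuous_comp _ _ _ (from_subspace `[a, b] g) (fun M : 'rV[R]_d => M 0 c)); first exact: gc.
exact: coord_continuous.
Qed.

End Build.

Unset Implicit Arguments.
Set Strict Implicit.

Theorem mainTheorem4 (R : realType) (d : nat) (a b : R)
  (gamma sigma : R -> 'rV[R]_d) (phi : nat -> R)
  (gamma_cont : {within `[a, b], continuous gamma})
  (sigma_cont : {within `[a, b], continuous sigma})
  (gamma_bv : forall c : 'I_d, bounded_variation a b (coordp gamma c))
  (sigma_bv : forall c : 'I_d, bounded_variation a b (coordp sigma c))
  (hphi : growth_cond phi) (hphi1 : growth_cond (phi_shift phi)) :
  (forall s t, s \in `[a, b] -> t \in `[a, b] ->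
     cvgn (series (sig_kernel_terms phi gamma sigma a s t)) /\
     cvgn (series (sig_kernel_terms (phi_shift phi) gamma sigma a s t))) /\
  (forall s t, s \in `[a, b] -> t \in `[a, b] ->
     exists I : R,
       is_RS2 (fun u v => sig_kernel (phi_shift phi) gamma sigma a u v)
              gamma sigma a s a t I /\
       sig_kernel phi gamma sigma a s t = phi 0%N + I).
Proof.
case: (leP a b) => ab; last first.
  split => s t; rewrite in_itv /= => /andP[h1 h2]; lra.
pose Wg t := \sum_(c < d) fine (total_variation a t (coordp gamma c)).
pose Ws t := \sum_(c < d) fine (total_variation a t (coordp sigma c)).
pose W t := Wg t + Ws t.
have Wc : ucont a b W.
  apply: ucont_add; apply: ucont_sum => c; apply: tv_ucont => //.
  - exact: coord_within.
  - exact: coord_within.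
have W0 : W a = 0.
  rewrite /W /Wg /Ws !big1 ?addr0 // => c _; by rewrite total_variationxx.
have Hg u v : a <= u -> u <= v -> v <= b ->
    \sum_(c < d) `|coordp gamma c v - coordp gamma c u| <= Wg v - Wg u.
  move=> h1 h2 h3; rewrite /Wg -sumrB; apply: ler_sum => c _.
  exact: (tv_ctrl (gamma_bv c) h1 h2 h3).
have Hs u v : a <= u -> u <= v -> v <= b ->
    \sum_(c < d) `|coordp sigma c v - coordp sigma c u| <= Ws v - Ws u.
  move=> h1 h2 h3; rewrite /Ws -sumrB; apply: ler_sum => c _.
  exact: (tv_ctrl (sigma_bv c) h1 h2 h3).
have S0 (f : R -> 'rV[R]_d) u v : 0 <= \sum_(c < d) `|coordp f c v - coordp f c u|.
  by apply: sumr_ge0 => c _; exact: normr_ge0.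
have gWa u v : a <= u -> u <= v -> v <= b ->
    \sum_(c < d) `|coordp gamma c v - coordp gamma c u| <= W v - W u.
  move=> h1 h2 h3; have := Hg u v h1 h2 h3; have := Hs u v h1 h2 h3.
  have := S0 sigma u v; rewrite /W; lra.
have gWs u v : a <= u -> u <= v -> v <= b ->
    \sum_(c < d) `|coordp sigma c v - coordp sigma c u| <= W v - W u.
  move=> h1 h2 h3; have := Hg u v h1 h2 h3; have := Hs u v h1 h2 h3.
  have := S0 gamma u v; rewrite /W; lra.
exact: (main_abs ab Wc W0 gWa gWs hphi hphi1).
Qed.
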